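(* The AMC (allocating marginal contributions) policy is temporal Nash stable.
   Context: Players: a finite set $N=\{a_1,\dots,a_n\}$. A characteristic function is $v:2^N\to\mathbb{R}_{\ge 0}$ with $v(\emptyset)=0$, monotone and bounded: $\mathsf{min}\le v(S)\le v(T)\le\mathsf{max}$ for all nonempty $S\subseteq T\subseteq N$, for fixed constants $0<\mathsf{min}\le\mathsf{max}$. Online process: an arrival order is a permutation $\pi=(\pi_1,\dots,\pi_n)$ of $N$; player $\pi_t$ arrives at time $t$; $\pi_{\prec t}$ is the set of players arriving before time $t$ and $\pi^{-1}(i)$ the arrival time of $i$. For $S\subseteq N$, $\pi_{|S}$ denotes the players of $S$ in the relative order of $\pi$. Let $C^{t-1}$ be the coalition structure of players arrived before time $t$ ($C^0=\emptyset$). At time $t$, player $\pi_t$ either joins an existing coalition $S\in C^{t-1}$ or forms $\{\pi_t\}$ (choice $S=\emptyset$); decisions are never revised. AMC policy: for a coalition $S$ and $i\in S$, $\varphi_i(S,\pi_{|S})=v((\pi_{\prec\pi^{-1}(i)}\cap S)\cup\{i\})-v(\pi_{\prec\pi^{-1}(i)}\cap S)$. Greedy players: $\pi_t$ chooses $S\in C^{t-1}\cup\{\emptyset\}$ maximizing $\varphi_{\pi_t}(S\cup\{\pi_t\},\pi_{|S\cup\{\pi_t\}})$ (predetermined tie-breaking). $C_g^t$ is the structure after time $t$ and $C_g=C_g^n$ the final one. For a time $t$, $\overline{C}_g^{t}\subseteq C_g$ denotes the set of coalitions of the final structure $C_g$ whose first-arriving member arrived at time at most $t$. Temporal Nash stability: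 for every $v$ and $\pi$, every $S\in C_g$ and every $i\in S$, there is no $S'\in\overline{C}_g^{\pi^{-1}(i)-1}\cup\{\emptyset\}$ with $\varphi_i(S'\cup\{i\},\pi_{|S'\cup\{i\}})>\varphi_i(S,\pi_{|S})$. *)

(* Defs.v *)
From mathcomp Require Import all_boot all_order all_algebra.
From mathcomp Require Import fingroup perm.
Set Implicit Arguments. Unset Strict Implicit. Unset Printing Implicit Defensive.
Import Order.TTheory GRing.Theory Num.Theory.
Local Open Scope ring_scope.

(* Players are 'I_n.  An arrival order is a permutation pi : {perm 'I_n};
   pi t is the player arriving at (0-based) time t, and (pi^-1 i : nat) is the
   (0-based) arrival time of player i. *)

Section Defs.
Variables (R : realFieldType) (n : nat).
Implicit Types (v : {set 'I_n} -> R) (pi : {perm 'I_n}) (S : {set 'I_n}).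

Definition char_fun (mn mx : R) v : Prop :=
  [/\ v set0 = 0, 0 < mn, mn <= mx &
      forall S T : {set 'I_n}, S != set0 -> S \subset T -> mn <= v S /\ v S <= v T /\ v T <= mx].

Definition before pi (i : 'I_n) : {set 'I_n} :=
  [set j | (pi^-1 j < pi^-1 i)%N]%g.

Definition amc v pi S (i : 'I_n) : R :=
  v ((before pi i :&: S) :|: [set i]) - v (before pi i :&: S).

(* One greedy step: player x = pi t joins S in C (or forms a new coalition,
   S = set0), where S maximizes the AMC payoff of x; C' is the new structure. *)
Definition greedy_step v pi (x : 'I_n) (C C' : {set {set 'I_n}}) : Prop :=
  exists S, [/\ S \in C \/ S = set0,
    (forall S', S' \in C \/ S' = set0 ->
       amc v pi (S' :|: [set x]) x <= amc v pi (S :|: [set x]) x) &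
    C' = (C :\ S) :|: [set S :|: [set x]]].

Definition greedy_run v pi (C : nat -> {set {set 'I_n}}) : Prop :=
  C 0%N = set0 /\ forall t : 'I_n, greedy_step v pi (pi t) (C t) (C t.+1).

(* Coalitions of Cg whose first-arriving member arrived at (1-based) time <= t,
   i.e. at 0-based time < t. *)
Definition Cbar pi (Cg : {set {set 'I_n}}) (t : nat) : {set {set 'I_n}} :=
  [set S in Cg | [exists j in S, (pi^-1 j < t)%N]%g].

Definition temporal_nash_stable v pi (Cg : {set {set 'I_n}}) : Prop :=
  forall S, S \in Cg -> forall i, i \in S ->
    ~ exists S', (S' \in Cbar pi Cg (pi^-1 i)%g \/ S' = set0) /\
                 amc v pi S i < amc v pi (S' :|: [set i]) i.

End Defs.

(* Main.v *)
Require Import Defs.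
From mathcomp Require Import all_boot all_order all_algebra.
From mathcomp Require Import fingroup perm.
Import Order.TTheory GRing.Theory Num.Theory.
Local Open Scope ring_scope.
Set Implicit Arguments.

Section Aux.
Variables (R : realFieldType) (n : nat) (v : {set 'I_n} -> R) (pi : {perm 'I_n})
  (C : nat -> {set {set 'I_n}}).

Definition PP (t : nat) : {set 'I_n} := [set j | ((pi^-1)%g j < t)%N].

Hypothesis HC0 : C 0%N = set0.
Hypothesis HCs : forall t : 'I_n, greedy_step v pi (pi t) (C t) (C t.+1).

Lemma pitK (t : 'I_n) : ((pi^-1)%g (pi t) : nat) = t.
Proof. by rewrite permK. Qed.

Lemma sub_lem t : (t <= n)%N -> forall U, U \in C t -> U \subset PP t.
Proof.
elim: t => [|t IH] Htn U; first by rewrite HC0 inE.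
have Ht : (t < n)%N by [].
have [T [HT _ ->]] := HCs (Ordinal Ht).
rewrite !inE /= => /orP [/andP [_ HU] | /eqP ->]; last first.
- apply/subsetP => j; rewrite !inE => /orP [|/eqP ->]; last by rewrite permK.
  move=> jT; case: HT => [HT|HT]; last by move: jT; rewrite HT inE.
  have := subsetP (IH (ltnW Ht) _ HT) j jT; rewrite inE; exact: ltnW.
- apply/subsetP => j jU; have := subsetP (IH (ltnW Ht) _ HU) j jU.
  rewrite !inE; exact: ltnW.
Qed.

Lemma down_lem d t : (t + d = n)%N -> forall S, S \in C n ->
  S :&: PP t = set0 \/ S :&: PP t \in C t.
Proof.
elim: d t => [|d IH] t Htd S HS.
  right; rewrite addn0 in Htd; subst t.
  suff -> : S :&: PP n = S by [].
  by apply/setP => j; rewrite !inE ltn_ord andbT.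
have Ht : (t < n)%N by rewrite -Htd addnS ltnS leq_addr.
have Htd' : (t.+1 + d = n)%N by rewrite addSnnS.
have := IH t.+1 Htd' S HS.
have [T [HT _ HCt]] := HCs (Ordinal Ht).
have HTsub : T \subset PP t.
  by case: HT => [HT|->]; [exact: sub_lem (ltnW Ht) _ HT | exact: sub0set].
have PPsub : PP t \subset PP t.+1 by apply/subsetP => j; rewrite !inE; exact: ltnW.
have -> : S :&: PP t = (S :&: PP t.+1) :&: PP t.
  by rewrite -setIA (setIidPr PPsub).
move=> [->|]; first by rewrite set0I; left.
rewrite HCt /= !inE => /orP [/andP [_ HU] | /eqP ->]; last first.
- have -> : (T :|: [set pi (Ordinal Ht)]) :&: PP t = T.
    apply/setP => j; rewrite !inE.
    case: (boolP (j \in T)) => jT /=.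
      by have := subsetP HTsub j jT; rewrite inE => ->.
    by case: eqP => // ->; rewrite pitK ltnn.
  by case: HT; [right|left].
- right; by rewrite (setIidPl (@sub_lem t (ltnW Ht) _ HU)).
Qed.

End Aux.

Theorem proposition3 (R : realFieldType) (n : nat) (mn mx : R)
    (v : {set 'I_n} -> R) (pi : {perm 'I_n}) (C : nat -> {set {set 'I_n}}) :
  char_fun mn mx v ->
  greedy_run v pi C ->
  temporal_nash_stable v pi (C n).
Proof.
move=> _ [HC0 HCs] S HS i iS; case=> S' [HS' Hlt].
set t := (pi^-1)%g i.
have Hbef : before pi i = PP pi t by [].
have iP : i \notin PP pi t by rewrite inE ltnn.
have addi : forall X, PP pi t :&: (X :|: [set i]) = PP pi t :&: X.
  move=> X; apply/setP => j; rewrite !inE.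
  by case: (eqVneq j i) => [->|ne]; rewrite ?ltnn // orbF.
have [T [HT Hmax HCt]] := HCs t.
have Ei : pi t = i by rewrite /t permKV.
rewrite Ei in Hmax HCt.
have HTsub : T \subset PP pi t.
  by case: HT => [HT|->]; [exact (sub_lem C HC0 HCs t (ltnW (ltn_ord t)) HT) | exact: sub0set].
have Hdown := down_lem C HC0 HCs (n - t.+1)%N t.+1.
have [E1|E1] := Hdown (subnKC (ltn_ord t)) S HS.
  by move: (@in_set0 _ i); rewrite -E1 !inE iS ltnSn.
rewrite HCt !inE in E1; case/orP: E1 => [/andP [_ HU] | /eqP E1].
  have := subsetP (sub_lem C HC0 HCs t (ltnW (ltn_ord t)) HU) i.
  by rewrite !inE iS ltnSn ltnn => /(_ isT).
have ST : before pi i :&: S = T.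
  rewrite Hbef.
  have PPsub : PP pi t \subset PP pi t.+1 by apply/subsetP => j; rewrite !inE; exact: ltnW.
  rewrite -(setIidPl PPsub) -setIA [PP pi t.+1 :&: S]setIC E1 addi.
  by rewrite setIC (setIidPl HTsub).
set W := PP pi t :&: S'.
have HW : W \in C t \/ W = set0.
  rewrite /W; case: HS' => [HS'|->]; last by right; rewrite setI0.
  rewrite inE in HS'; case/andP: HS' => HS' _.
  have [d Hd] : exists d, (t + d = n)%N by exists (n - t)%N; rewrite subnKC // ltnW.
  rewrite /W setIC; by case: (down_lem C HC0 HCs _ _ Hd HS'); [right|left].
have HWsub : W \subset PP pi t by exact: subsetIl.
have := Hmax W HW.
have -> : amc v pi (W :|: [set i]) i = amc v pi (S' :|: [set i]) i.
  by rewrite /amc Hbef !addi (setIidPr HWsub) /W.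
have -> : amc v pi (T :|: [set i]) i = amc v pi S i.
  by rewrite /amc ST Hbef addi (setIidPr HTsub).
by rewrite leNgt Hlt.
Qed.
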